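(* Let $n\ge2$. For every $X\in U_Q$ and every $s>0$ such that the horoballs $\mathcal H_s$ and $X\mathcal H_s$ of $\mathbb H^n_{\mathbb C}$ have disjoint interiors, we have $$d'_{\mathbb H^n_{\mathbb C}}(\mathcal H_s,X\mathcal H_s)=\log|c|+\log\frac s2,$$ where $c$ is the bottom-left entry of $X$ in the block decomposition $\mathbb C\times\mathbb C^{n-1}\times\mathbb C$.
   Context: $\mathbb H^n_{\mathbb C}=\{(w_0,w)\in\mathbb C\times\mathbb C^{n-1}:2\mathrm{Re}\,w_0-|w|^2>0\}$ is the Siegel domain with metric $ds^2=\frac{4}{(2\mathrm{Re}\,w_0-|w|^2)^2}\big((dw_0-dw^*w)(\overline{dw_0}-w^*dw)+(2\mathrm{Re}\,w_0-|w|^2)dw^*dw\big)$, $d_{\mathbb H^n_{\mathbb C}}$ its Riemannian distance and $d'_{\mathbb H^n_{\mathbb C}}=\frac12 d_{\mathbb H^n_{\mathbb C}}$; $\mathcal H_s=\{2\mathrm{Re}\,w_0-|w|^2\ge s\}$. Let $q(z_0,z,z_n)=-z_0\bar z_n-z_n\bar z_0+|z|^2$ on $\mathbb C\times\mathbb C^{n-1}\times\mathbb C$, with matrix $Q=\begin{pmatrix}0&0&-1\\0&I&0\\-1&0&0\end{pmatrix}$, and $U_Q$ the group of invertible complex matrices preserving $q$. Via the embedding $(w_0,w)\mapsto[w_0:w:1]$ of $\mathbb H^n_{\mathbb C}$ onto the negative cone of $q$ in $\mathbb P_n(\mathbb C)$, $U_Q$ acts isometrically on $\mathbb H^n_{\mathbb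 C}$ by projective transformations. The distance between two sets is the infimum of distances between their points. *)

(* Defs.v *)
From HB Require Import structures.
From mathcomp Require Import all_boot all_order all_algebra.
From mathcomp Require Import all_classical all_reals all_analysis.
From mathcomp Require Import complex.
Set Implicit Arguments. Unset Strict Implicit. Unset Printing Implicit Defensive.
Import Order.TTheory GRing.Theory Num.Theory.
Import numFieldNormedType.Exports.
Local Open Scope classical_set_scope.
Local Open Scope ring_scope.

Section ComplexHyperbolic.
Variable R : realType.
Local Notation C := (complex R).

Definition nsq (z : C) : R := complex.Re z ^+ 2 + complex.Im z ^+ 2.
Definition cabs (z : C) : R := Num.sqrt (nsq z).

(* A point (w0, w) of C x C^{n-1} is a function 'I_n -> C:
   index 0 is w0, indices 1..n-1 are the coordinates of w. *)
Variable n : nat.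
Definition pt := 'I_n -> C.

Definition is_w0 (i : 'I_n) : bool := (nat_of_ord i == 0)%N.

Definition height (p : pt) : R :=
  \sum_(i < n) (if is_w0 i then 2 * complex.Re (p i) else - nsq (p i)).

Definition Siegel : set pt := [set p | 0 < height p].

Definition horoball (s : R) : set pt := [set p | s <= height p].

(* the metric ds^2 at point p applied to the tangent vector v :
   4/h^2 ( |dw0 - dw^* w|^2 + h |dw|^2 ) *)
Definition metric (p v : pt) : R :=
  let h := height p in
  let a := \sum_(i < n) (if is_w0 i then v i else - (conjc (v i) * p i)) in
  let b := \sum_(i < n) (if is_w0 i then 0 else nsq (v i)) in
  4 / h ^+ 2 * (nsq a + h * b).

Definition C1curve (g : R -> pt) : Prop :=
  forall i : 'I_n,
    (forall t, derivable (fun u => complex.Re (g u i)) t 1) /\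
    continuous (fun u => derive1 (fun u => complex.Re (g u i)) u) /\
    (forall t, derivable (fun u => complex.Im (g u i)) t 1) /\
    continuous (fun u => derive1 (fun u => complex.Im (g u i)) u).

Definition velocity (g : R -> pt) (t : R) : pt :=
  fun i => Complex (derive1 (fun u => complex.Re (g u i)) t)
                   (derive1 (fun u => complex.Im (g u i)) t).

Definition curve_length (g : R -> pt) : R :=
  Rintegral lebesgue_measure `[0, 1]
    (fun t => Num.sqrt (metric (g t) (velocity g t))).

Definition admissible (p q : pt) (g : R -> pt) : Prop :=
  C1curve g /\ g 0 = p /\ g 1 = q /\
  (forall t, 0 <= t <= 1 -> Siegel (g t)).

Definition dist_CH (p q : pt) : R :=
  inf [set curve_length g | g in admissible p q].

Definition dist'_CH (p q : pt) : R := dist_CH p q / 2.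

Definition set_dist' (A B : set pt) : R :=
  inf [set dist'_CH p q | p in A & q in B].

Definition cinterior (A : set pt) : set pt :=
  [set p | exists2 e : R, 0 < e &
     forall q : pt, \sum_(i < n) nsq (q i - p i) < e -> A q].

(* The hermitian form q with matrix Q on C x C^{n-1} x C = C^{n+1};
   index 0 is z0, indices 1..n-1 are z, index n is zn. *)
Definition Qmx : 'M[C]_(n.+1) :=
  \matrix_(i, j)
    (if (nat_of_ord i == 0)%N && (nat_of_ord j == n) then -1
     else if (nat_of_ord i == n) && (nat_of_ord j == 0)%N then -1
     else if (i == j) && (0 < nat_of_ord i < n)%N then 1 else 0).

Definition in_UQ (X : 'M[C]_(n.+1)) : Prop :=
  X \in unitmx /\ (map_mx conjc X)^T *m Qmx *m X = Qmx.

Definition lift_pt (p : pt) : 'cV[C]_(n.+1) :=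
  \col_(i < n.+1) (if (i < n)%N =P true is ReflectT h then p (Ordinal h) else 1).

Definition act (X : 'M[C]_(n.+1)) (p : pt) : pt :=
  let z := X *m lift_pt p in
  fun i => z (widen_ord (leqnSn n) i) 0 / z ord_max 0.

Definition act_set (X : 'M[C]_(n.+1)) (A : set pt) : set pt := act X @` A.

Definition bottom_left (X : 'M[C]_(n.+1)) : C := X ord_max ord0.

End ComplexHyperbolic.

(* Main.v *)
Require Import Defs.
From HB Require Import structures.
From mathcomp Require Import all_boot all_order all_algebra.
From mathcomp Require Import all_classical all_reals all_analysis.
From mathcomp Require Import complex.
From mathcomp Require Import ring lra.
Set Implicit Arguments. Unset Strict Implicit. Unset Printing Implicit Defensive.
Import Order.TTheory GRing.Theory Num.Theory.
Import numFieldNormedType.Exports.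
Local Open Scope classical_set_scope.
Local Open Scope ring_scope.

Section Alg.
Variable R : realType.
Local Notation C := (complex R).
Variable m : nat.
Local Notation n := m.+2.
Local Notation cv := 'cV[C]_(n.+1).

Lemma ReM (x y : C) : complex.Re (x * y) = complex.Re x * complex.Re y - complex.Im x * complex.Im y.
Proof. by case: x => a b; case: y => c d. Qed.
Lemma ImM (x y : C) : complex.Im (x * y) = complex.Re x * complex.Im y + complex.Im x * complex.Re y.
Proof. by case: x => a b; case: y => c d. Qed.
Lemma ReD (x y : C) : complex.Re (x + y) = complex.Re x + complex.Re y.
Proof. by case: x => a b; case: y => c d. Qed.
Lemma ImD (x y : C) : complex.Im (x + y) = complex.Im x + complex.Im y.
Proof. by case: x => a b; case: y => c d. Qed.
Lemma ReN (x : C) : complex.Re (- x) = - complex.Re x.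
Proof. by case: x. Qed.
Lemma ImN (x : C) : complex.Im (- x) = - complex.Im x.
Proof. by case: x. Qed.
Lemma ReJ (x : C) : complex.Re (conjc x) = complex.Re x.
Proof. by case: x. Qed.
Lemma ImJ (x : C) : complex.Im (conjc x) = - complex.Im x.
Proof. by case: x. Qed.
Lemma Re_sum (I : Type) (r : seq I) (P : pred I) (F : I -> C) :
  complex.Re (\sum_(i <- r | P i) F i) = \sum_(i <- r | P i) complex.Re (F i).
Proof. by apply: (big_morph _ ReD). Qed.
Lemma Im_sum (I : Type) (r : seq I) (P : pred I) (F : I -> C) :
  complex.Im (\sum_(i <- r | P i) F i) = \sum_(i <- r | P i) complex.Im (F i).
Proof. by apply: (big_morph _ ImD). Qed.

Definition wid (i : 'I_n) : 'I_(n.+1) := widen_ord (leqnSn n) i.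
Definition NN : 'I_(n.+1) := ord_max.
Definition Sform (u v : cv) : C := ((map_mx conjc u)^T *m Qmx R n *m v) 0 0.
Definition Sterm (u v : cv) (i : 'I_n) : C :=
  if is_w0 i then - (conjc (u (wid i) 0) * v NN 0 + conjc (u NN 0) * v (wid i) 0)
  else conjc (u (wid i) 0) * v (wid i) 0.

Lemma Qcol (v : cv) (j : 'I_(n.+1)) :
  (Qmx R n *m v) j 0 = if (nat_of_ord j == 0)%N then - v NN 0
     else if (nat_of_ord j == n)%N then - v 0 0 else v j 0.
Proof.
rewrite mxE.
have [j0|jn0] := eqVneq (nat_of_ord j) 0%N.
  rewrite (bigD1 NN) //= big1 ?addr0.
    by rewrite !mxE j0 /= eqxx mulN1r.
  move=> k kN; rewrite !mxE j0 /=.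
  have -> : (nat_of_ord k == n) = false.
    by apply/negbTE; apply: contra kN => /eqP kn; apply/eqP/val_inj.
  by rewrite andbF mul0r.
have [jn|jnn] := eqVneq (nat_of_ord j) n.
  rewrite (bigD1 0) //= big1 ?addr0.
    by rewrite !mxE jn /= eqxx mulN1r.
  move=> k k0; rewrite !mxE jn /=.
  have -> : (nat_of_ord k == 0)%N = false.
    by apply/negbTE; apply: contra k0 => /eqP kn; apply/eqP/val_inj.
  rewrite andbF /=.
  by rewrite ltnn andbF mul0r.
rewrite (bigD1 j) //= big1 ?addr0.
  rewrite !mxE (negbTE jn0) (negbTE jnn) /= eqxx /= lt0n jn0 /=.
  have -> : (nat_of_ord j < n)%N by rewrite ltn_neqAle jnn -ltnS ltn_ord.
  by rewrite mul1r.
move=> k kj; rewrite !mxE (negbTE jn0) (negbTE jnn) /= eq_sym (negbTE kj) /=.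
by rewrite mul0r.
Qed.

Lemma SformE (u v : cv) : Sform u v = \sum_(i < n) Sterm u v i.
Proof.
rewrite /Sform -mulmxA mxE big_ord_recr /=.
rewrite big_ord_recl [in RHS]big_ord_recl /=.
under eq_bigr do rewrite Qcol !mxE.
rewrite !Qcol !mxE /= /Sterm /=.

rewrite eqxx.
have w0 : wid ord0 = 0 by apply/val_inj.
have -> : widen_ord (leqnSn n) ord0 = wid ord0 by [].
rewrite w0.
under eq_bigr => i _.
  have -> : (bump 0 i == n) = false by rewrite /bump /= add1n eqSS ltn_eqF.
  over.
rewrite /NN /=.
rewrite /wid.
rewrite addrC addrA; congr (_ + _).
ring.
Qed.

Lemma lift_wid (p : pt R n) (i : 'I_n) : lift_pt p (wid i) 0 = p i.
Proof.
rewrite mxE; case: eqP => // h; first by congr p; apply/val_inj.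
by exfalso; apply: h; rewrite /= ltn_ord.
Qed.

Lemma lift_NN (p : pt R n) : lift_pt p NN 0 = 1.
Proof. by rewrite mxE; case: eqP => // h; exfalso; move: h; rewrite /= ltnn. Qed.

Lemma SformDl (u w v : cv) : Sform (u + w) v = Sform u v + Sform w v.
Proof.
rewrite !SformE -big_split /=; apply: eq_bigr => i _; rewrite /Sterm !mxE !rmorphD.
by case: ifP => _; ring.
Qed.

Lemma SformDr (u w v : cv) : Sform v (u + w) = Sform v u + Sform v w.
Proof.
rewrite !SformE -big_split /=; apply: eq_bigr => i _; rewrite /Sterm !mxE.
by case: ifP => _; ring.
Qed.

Lemma SformZl (a : C) (u v : cv) : Sform (a *: u) v = conjc a * Sform u v.
Proof.
rewrite !SformE mulr_sumr; apply: eq_bigr => i _; rewrite /Sterm !mxE !rmorphM.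
by case: ifP => _; ring.
Qed.

Lemma SformZr (a : C) (u v : cv) : Sform u (a *: v) = a * Sform u v.
Proof.
rewrite !SformE mulr_sumr; apply: eq_bigr => i _; rewrite /Sterm !mxE.
by case: ifP => _; ring.
Qed.

Lemma Sinv (X : 'M[C]_(n.+1)) (u v : cv) : in_UQ X ->
  Sform (X *m u) (X *m v) = Sform u v.
Proof.
move=> [_ hX]; rewrite /Sform map_mxM trmx_mul.
have -> : (map_mx conjc u)^T *m (map_mx conjc X)^T *m Qmx R n *m (X *m v)
  = (map_mx conjc u)^T *m ((map_mx conjc X)^T *m Qmx R n *m X) *m v by rewrite !mulmxA.
by rewrite hX.
Qed.

Definition E0 : cv := \col_(i < n.+1) (if (nat_of_ord i == 0)%N then 1 else 0).

Lemma E0_wid (i : 'I_n) : E0 (wid i) 0 = if is_w0 i then 1 else 0.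
Proof. by rewrite mxE. Qed.
Lemma E0_NN : E0 NN 0 = 0.
Proof. by rewrite mxE. Qed.

Lemma w0_ord0 : is_w0 (ord0 : 'I_n) = true. Proof. by []. Qed.
Lemma w0_lift (i : 'I_m.+1) : is_w0 (lift ord0 i : 'I_n) = false. Proof. by []. Qed.

Lemma Sform_E0l (v : cv) : Sform E0 v = - v NN 0.
Proof.
rewrite SformE big_ord_recl big1 ?addr0.
  by rewrite /Sterm !E0_wid E0_NN w0_ord0 conjc1 conjc0; ring.
by move=> i _; rewrite /Sterm E0_wid w0_lift conjc0 mul0r.
Qed.

Lemma Sform_E0r (u : cv) : Sform u E0 = - conjc (u NN 0).
Proof.
rewrite SformE big_ord_recl big1 ?addr0.
  by rewrite /Sterm !E0_wid E0_NN w0_ord0; ring.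
by move=> i _; rewrite /Sterm E0_wid w0_lift mulr0.
Qed.

Lemma ReSformE (u v : cv) : complex.Re (Sform u v) = \sum_(i < n) complex.Re (Sterm u v i).
Proof. by rewrite SformE Re_sum. Qed.

Lemma ReSlift (p : pt R n) : complex.Re (Sform (lift_pt p) (lift_pt p)) = - height p.
Proof.
rewrite ReSformE /height -sumrN; apply: eq_bigr => i _.
rewrite /Sterm lift_NN !lift_wid; case: ifP => _.
  by rewrite !ReN ReD !ReM !ReJ !ImJ /=; ring.
by rewrite ReM ReJ ImJ /nsq; ring.
Qed.

Lemma ImSlift (p : pt R n) : complex.Im (Sform (lift_pt p) (lift_pt p)) = 0.
Proof.
rewrite SformE Im_sum big1 // => i _.
rewrite /Sterm lift_NN !lift_wid; case: ifP => _.
  by rewrite !ImN ImD !ImM !ReJ !ImJ /=; ring.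
by rewrite ImM ReJ ImJ; ring.
Qed.

Ltac cplx := rewrite ?/nsq ?(ReM,ImM,ReD,ImD,ReN,ImN,ReJ,ImJ).

Lemma nsq_ge0 (z : C) : 0 <= nsq z.
Proof. by rewrite /nsq addr_ge0 // sqr_ge0. Qed.
Lemma nsqM (x y : C) : nsq (x * y) = nsq x * nsq y.
Proof. cplx; ring. Qed.
Lemma nsqJ (x : C) : nsq (conjc x) = nsq x.
Proof. cplx; ring. Qed.
Lemma nsqN (x : C) : nsq (- x) = nsq x.
Proof. cplx; ring. Qed.
Lemma Re2_le (z : C) : complex.Re z ^+ 2 <= nsq z.
Proof. by rewrite /nsq lerDl sqr_ge0. Qed.
Lemma nsq_gt0 (z : C) : z != 0 -> 0 < nsq z.
Proof.
case: z => a b nz; rewrite /nsq /=; rewrite lt_neqAle addr_ge0 ?sqr_ge0 // andbT.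
apply: contra nz; rewrite eq_sym paddr_eq0 ?sqr_ge0 // !sqrf_eq0 => /andP[/eqP-> /eqP->].
by [].
Qed.
Lemma nsqV (z : C) : nsq (z^-1) = (nsq z)^-1.
Proof.
have [->|nz] := eqVneq z 0; first by rewrite invr0 /nsq /= expr0n /= addr0 invr0.
move: (nsq_gt0 nz); case: z nz => a b _; rewrite /nsq /= => h.
by field; rewrite gt_eqF.
Qed.
Lemma Re_JM (a w : C) : complex.Re (conjc a * a * w) = nsq a * complex.Re w.
Proof. cplx; ring. Qed.

Definition pz (z : cv) : pt R n := fun i => z (wid i) 0 / z NN 0.

Lemma actE (X : 'M[C]_(n.+1)) (p : pt R n) : act X p = pz (X *m lift_pt p).
Proof. by []. Qed.

Lemma lift_pz (z : cv) : z NN 0 != 0 -> lift_pt (pz z) = (z NN 0)^-1 *: z.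
Proof.
move=> nz; apply/matrixP => i j; rewrite (ord1 j) !mxE.
case: eqP => h.
  by rewrite /pz mulrC; congr (_ * z _ 0); apply/val_inj.
have -> : i = NN by apply/val_inj/eqP; rewrite /= eqn_leq -ltnS ltn_ord /= leqNgt; apply/negP => hh; exact: h hh.
by rewrite mulVf.
Qed.

Lemma height_pz (z : cv) : z NN 0 != 0 ->
  height (pz z) = - complex.Re (Sform z z) / nsq (z NN 0).
Proof.
move=> nz; apply: oppr_inj; rewrite -ReSlift lift_pz // SformZl SformZr mulrA Re_JM nsqV.
by rewrite mulNr opprK mulrC.
Qed.

Lemma XE0 (X : 'M[C]_(n.+1)) (i : 'I_(n.+1)) : (X *m E0) i 0 = X i 0.
Proof.
rewrite mxE (bigD1 0) //= big1 ?addr0; first by rewrite mxE /= mulr1.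
move=> k k0; rewrite !mxE; have -> : (nat_of_ord k == 0)%N = false by apply: contraNF k0 => /eqP h; apply/eqP/val_inj.
by rewrite mulr0.
Qed.

Lemma key_id (z x : cv) :
  2 * complex.Re (conjc (x NN 0) * z NN 0 * Sform z x) =
  nsq (x NN 0) * complex.Re (Sform z z) + nsq (z NN 0) * complex.Re (Sform x x)
  - \sum_(i < n) (if is_w0 i then 0 else nsq (x NN 0 * z (wid i) 0 - z NN 0 * x (wid i) 0)).
Proof.
rewrite SformE !ReSformE mulr_sumr Re_sum !mulr_sumr -big_split -sumrB /=.
apply: eq_bigr => i _; rewrite /Sterm; case: ifP => _; cplx; ring.
Qed.

Lemma Sterm_ge0 (z : cv) (i : 'I_n) : z NN 0 = 0 -> 0 <= complex.Re (Sterm z z i).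
Proof.
move=> h; rewrite /Sterm h; case: ifP => _; cplx.
  by rewrite /=; lra.
by rewrite /=; nra.
Qed.

Lemma SE0E0 : Sform E0 E0 = 0.
Proof. by rewrite Sform_E0l E0_NN oppr0. Qed.

Lemma Slift_E0 (p : pt R n) : Sform (lift_pt p) E0 = -1.
Proof. by rewrite Sform_E0r lift_NN conjc1. Qed.

Lemma nz_of_neg (z : cv) : complex.Re (Sform z z) < 0 -> z NN 0 != 0.
Proof.
move=> h; apply/eqP => z0; move: h; rewrite ReSformE ltNge => /negP; apply.
by apply: sumr_ge0 => i _; apply: Sterm_ge0.
Qed.

Lemma bl_E0 (X : 'M[C]_(n.+1)) : bottom_left X = (X *m E0) NN 0.
Proof. by rewrite XE0. Qed.

Lemma act_bound (X : 'M[C]_(n.+1)) (p : pt R n) : in_UQ X -> 0 < height p ->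
  (X *m lift_pt p) NN 0 != 0 /\
  height (act X p) = height p / nsq ((X *m lift_pt p) NN 0) /\
  nsq (bottom_left X) * height p * height (act X p) <= 4.
Proof.
move=> hX hp.
set z := X *m lift_pt p; set x := X *m E0.
have hzz : complex.Re (Sform z z) = - height p by rewrite Sinv // ReSlift.
have hxx : Sform x x = 0 by rewrite Sinv // SE0E0.
have hzx : Sform z x = -1 by rewrite Sinv // Slift_E0.
have nz : z NN 0 != 0 by apply: nz_of_neg; rewrite hzz oppr_lt0.
have hact : height (act X p) = height p / nsq (z NN 0) by rewrite actE height_pz // hzz opprK.
split => //; split => //.
rewrite hact bl_E0 -/x.
have hk := key_id z x.
rewrite hzx hxx hzz /= mulr0 addr0 in hk.
set S := \sum_(i < n) _ in hk.
have S0 : 0 <= S by apply: sumr_ge0 => i _; case: ifP => _ //; apply: nsq_ge0.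
have hre : complex.Re (conjc (x NN 0) * z NN 0 * -1) = - complex.Re (conjc (x NN 0) * z NN 0).
  by rewrite mulrN1 ReN.
rewrite hre in hk.
have h2 := Re2_le (conjc (x NN 0) * z NN 0).
rewrite nsqM nsqJ in h2.
have B0 := nsq_gt0 nz.
have A0 := nsq_ge0 (x NN 0).
set A := nsq (x NN 0) in hk h2 A0 *.
set B := nsq (z NN 0) in h2 B0 *.
set r := complex.Re _ in hk h2.
set h := height p in hp hk *.
have hr : A * h <= 2 * r by lra.
rewrite mulrA ler_pdivrMr //.
have [A00|Apos] := eqVneq A 0; first by rewrite A00 !mul0r; lra.
have Ap : 0 < A by rewrite lt_neqAle eq_sym Apos A0.
have : (A * h) ^+ 2 <= 4 * (A * B).
  apply: le_trans (_ : (2 * r) ^+ 2 <= _).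
    by rewrite ler_sqr ?nnegrE; nra.
  by rewrite exprMn; lra.
move=> hh; nra.
Qed.

Lemma in_image (X : 'M[C]_(n.+1)) (s : R) (q : pt R n) : in_UQ X -> 0 < height q ->
  s * nsq (Sform (lift_pt q) (X *m E0)) <= height q ->
  act_set X (@horoball R n s) q.
Proof.
move=> hX hq hs.
have hU : X \in unitmx by case: hX.
set y := invmx X *m lift_pt q.
have Xy : X *m y = lift_pt q by rewrite /y mulmxA mulmxV // mul1mx.
have hyy : complex.Re (Sform y y) = - height q by rewrite -(Sinv _ _ hX) Xy ReSlift.
have ny : y NN 0 != 0 by apply: nz_of_neg; rewrite hyy oppr_lt0.
have hyE : Sform y E0 = Sform (lift_pt q) (X *m E0) by rewrite -(Sinv _ _ hX) Xy.
rewrite Sform_E0r in hyE.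
have nyq : nsq (y NN 0) = nsq (Sform (lift_pt q) (X *m E0)) by rewrite -hyE nsqN nsqJ.
have By := nsq_gt0 ny.
exists (pz y).
  rewrite /horoball /= height_pz // hyy opprK ler_pdivlMr // nyq; lra.
rewrite actE lift_pz // -scalemxAr Xy.
have sE : forall (a : C) (M : cv) k, (a *: M) k 0 = a * M k 0 by move=> a M k; rewrite mxE.
apply/funext => i; rewrite /pz !sE lift_wid lift_NN mulr1.
by rewrite mulrC mulKf // invr_eq0.
Qed.

Definition hterm (p : pt R n) (i : 'I_n) : R :=
  if is_w0 i then 2 * complex.Re (p i) else - nsq (p i).

Lemma heightE (p : pt R n) : height p = \sum_(i < n) hterm p i.
Proof. by []. Qed.

Lemma amgm (a b l : R) : 0 < l -> 2 * a * b <= l * a ^+ 2 + b ^+ 2 / l.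
Proof.
move=> l0; rewrite -subr_ge0.
have -> : l * a ^+ 2 + b ^+ 2 / l - 2 * a * b = (l * a - b) ^+ 2 / l.
  by field; rewrite gt_eqF.
by apply: divr_ge0; [apply: sqr_ge0 | apply: ltW].
Qed.

Lemma hterm_near0 (b : bool) (a d : C) (l : R) : 0 < l ->
  (if b then 2 * complex.Re a else - nsq a) - l * (if b then 1 else nsq a) - (1 + l^-1) * nsq d
  <= (if b then 2 * complex.Re (a + d) else - nsq (a + d)).
Proof.
move=> l0.
have li : l * l^-1 = 1 by rewrite mulfV // gt_eqF.
have lip : 0 < l^-1 by rewrite invr_gt0.
case: b.
  have h1 := amgm (-1) (complex.Re d) l0.
  have h2 := Re2_le d.
  rewrite ReD; rewrite /nsq in h2 *; nra.
have h1 := amgm (complex.Re a) (complex.Re d) l0.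
have h2 := amgm (complex.Im a) (complex.Im d) l0.
rewrite /nsq ReD ImD.
nra.
Qed.

Lemma hterm_near (p q : pt R n) (i : 'I_n) (l : R) : 0 < l ->
  hterm p i - l * (if is_w0 i then 1 else nsq (p i)) - (1 + l^-1) * nsq (q i - p i)
  <= hterm q i.
Proof.
move=> l0; have := hterm_near0 (is_w0 i) (p i) (q i - p i) l0.
by rewrite [p i + _]addrC subrK.
Qed.

Lemma h_near (p : pt R n) (eta : R) : 0 < eta -> exists2 e : R, 0 < e &
  forall q : pt R n, \sum_(i < n) nsq (q i - p i) < e -> height p - eta < height q.
Proof.
move=> et.
set W := \sum_(i < n) (if is_w0 i then 1 else nsq (p i)).
have W0 : 0 <= W by apply: sumr_ge0 => i _; case: ifP => _ //; apply: nsq_ge0.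
set l := eta / (2 * (W + 1)).
have l0 : 0 < l by apply: divr_gt0 => //; lra.
have lip : 0 < l^-1 by rewrite invr_gt0.
exists (eta / (2 * (1 + l^-1))); first by apply: divr_gt0 => //; lra.
move=> q hN.
have hs : \sum_(i < n) (hterm p i - l * (if is_w0 i then 1 else nsq (p i)) - (1 + l^-1) * nsq (q i - p i))
   <= height q by rewrite heightE; apply: ler_sum => i _; apply: hterm_near.
rewrite !sumrB -!mulr_sumr -heightE -/W in hs.
set N := \sum_(i < n) _ in hN hs.
have h1 : l * W < eta / 2.
  rewrite /l mulrAC ltr_pdivrMr; last lra.
  have : eta * W < eta * (W + 1) by rewrite ltr_pM2l //; lra.
  lra.
have h2 : (1 + l^-1) * N < eta / 2.
  rewrite mulrC -ltr_pdivlMr; last lra.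
  by rewrite -mulrA -invfM.
lra.
Qed.

Lemma sqr_sum_le (k : nat) (a : 'I_k -> R) :
  (\sum_(i < k) a i) ^+ 2 <= k%:R * \sum_(i < k) a i ^+ 2.
Proof.
elim: k a => [|k IH] a; first by rewrite !big_ord0 expr0n /= mul0r.
rewrite !big_ord_recr /=.
have := IH (fun i => a (widen_ord (leqnSn k) i)).
set S := \sum_(i < k) _; set T := \sum_(i < k) _.
have T0 : 0 <= T by apply: sumr_ge0 => i _; apply: sqr_ge0.
set x := a ord_max => hST.
rewrite -natr1.
have k0 : 0 <= k%:R :> R by apply: ler0n.
have [kz|kp] := eqVneq (k%:R : R) 0.
  have S0 : S ^+ 2 <= 0 by rewrite kz mul0r in hST.
  have : S = 0 by apply/eqP; rewrite -sqrf_eq0 eq_le S0 sqr_ge0.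
  move=> ->; rewrite kz; nra.
have kpos : 0 < k%:R :> R by rewrite lt_neqAle eq_sym kp k0.
have hsq : 0 <= (S - k%:R * x) ^+ 2 by apply: sqr_ge0.
nra.
Qed.

Lemma nsq_sum (k : nat) (F : 'I_k -> C) :
  nsq (\sum_(i < k) F i) <= k%:R * \sum_(i < k) nsq (F i).
Proof.
rewrite /nsq Re_sum Im_sum big_split /= mulrDr.
by apply: lerD; apply: sqr_sum_le.
Qed.

Lemma nsqD_le (A B : C) (l : R) : 0 < l ->
  nsq (A + B) <= (1 + l) * nsq A + (1 + l^-1) * nsq B.
Proof.
move=> l0.
have h1 := amgm (complex.Re A) (complex.Re B) l0.
have h2 := amgm (complex.Im A) (complex.Im B) l0.
rewrite /nsq ReD ImD; rewrite -!/(_ / l) in h1 h2.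
have -> : (1 + l^-1) * (complex.Re B ^+ 2 + complex.Im B ^+ 2) =
   complex.Re B ^+ 2 + complex.Im B ^+ 2 + complex.Re B ^+ 2 / l + complex.Im B ^+ 2 / l.
  by rewrite mulrDl mul1r mulrDr addrA; congr (_ + _ + _); rewrite mulrC.
nra.
Qed.

Lemma Sform_lift_diff (p q : pt R n) (x : cv) :
  Sform (lift_pt q) x = Sform (lift_pt p) x +
    \sum_(i < n) conjc (q i - p i) * (if is_w0 i then - x NN 0 else x (wid i) 0).
Proof.
rewrite !SformE -big_split /=; apply: eq_bigr => i _.
rewrite /Sterm !lift_wid !lift_NN rmorphB /=; case: ifP => _; ring.
Qed.

Lemma f_near (p : pt R n) (x : cv) (eta : R) : 0 < eta -> exists2 e : R, 0 < e &
  forall q : pt R n, \sum_(i < n) nsq (q i - p i) < e ->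
  nsq (Sform (lift_pt q) x) < nsq (Sform (lift_pt p) x) + eta.
Proof.
move=> et.
set y := fun i : 'I_n => if is_w0 i then - x NN 0 else x (wid i) 0.
set K := \sum_(i < n) nsq (y i).
have K0 : 0 <= K by apply: sumr_ge0 => i _; apply: nsq_ge0.
have yK : forall i, nsq (y i) <= K.
  move=> i; rewrite /K (bigD1 i) //= lerDl; apply: sumr_ge0 => j _; apply: nsq_ge0.
set A := Sform (lift_pt p) x.
set l := eta / (2 * (nsq A + 1)).
have A0 := nsq_ge0 A.
have l0 : 0 < l by apply: divr_gt0 => //; lra.
have lip : 0 < l^-1 by rewrite invr_gt0.
set M := (1 + l^-1) * (n%:R * K + 1).
have M0 : 0 < M by apply: mulr_gt0; [lra | apply: ltr_wpDl => //; apply: mulr_ge0 => //; apply: ler0n].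
exists (eta / (2 * M)); first by apply: divr_gt0 => //; lra.
move=> q hN.
rewrite (Sform_lift_diff p) -/A.
set B := \sum_(i < n) _.
set N := \sum_(i < n) _ in hN.
have N0 : 0 <= N by apply: sumr_ge0 => i _; apply: nsq_ge0.
have hB : nsq B <= n%:R * K * N.
  apply: (le_trans (nsq_sum _)); rewrite -mulrA ler_wpM2l ?ler0n //.
  rewrite /N mulr_sumr; apply: ler_sum => i _; rewrite nsqM nsqJ mulrC; apply: ler_wpM2r; [apply: nsq_ge0 | apply: yK].
apply: le_lt_trans; first exact: (nsqD_le A B l0).
have h1 : l * nsq A < eta / 2.
  rewrite /l mulrAC ltr_pdivrMr; last lra.
  have : eta * nsq A < eta * (nsq A + 1) by rewrite ltr_pM2l //; lra.
  lra.
have h2 : (1 + l^-1) * nsq B < eta / 2.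
  apply: (le_lt_trans (_ : _ <= (1 + l^-1) * (n%:R * K * N + N))).
    rewrite ler_wpM2l //; first lra.
    lra.
  have -> : (1 + l^-1) * (n%:R * K * N + N) = M * N by rewrite /M; ring.
  rewrite mulrC -ltr_pdivlMr //.
  by rewrite -mulrA -invfM.
lra.
Qed.

Definition vpt (x : cv) (t : R) : pt R n :=
  fun i => x (wid i) 0 / x NN 0 + (if is_w0 i then Complex t 0 else 0).

Lemma lift_vpt (x : cv) (t : R) : x NN 0 != 0 ->
  lift_pt (vpt x t) = (x NN 0)^-1 *: x + (Complex t 0) *: E0.
Proof.
move=> nz; apply/matrixP => i j; rewrite (ord1 j) !mxE.
case: eqP => h.
  rewrite /vpt mulrC; congr (_ * x _ 0 + _); first by apply/val_inj.
  by rewrite /is_w0 /=; case: ifP => _; rewrite ?mulr1 ?mulr0.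
have -> : i = NN by apply/val_inj/eqP; rewrite /= eqn_leq -ltnS ltn_ord /= leqNgt; apply/negP => hh; exact: h hh.
by rewrite mulVf // /NN /= mulr0 addr0.
Qed.

Lemma S_vpt (x : cv) (t : R) : x NN 0 != 0 -> Sform x x = 0 ->
  Sform (lift_pt (vpt x t)) (lift_pt (vpt x t)) = - (Complex t 0 + Complex t 0) /\
  Sform (lift_pt (vpt x t)) x = - (Complex t 0 * x NN 0).
Proof.
move=> nz hxx; rewrite lift_vpt //.
rewrite !SformDl !SformDr !SformZl !SformZr hxx SE0E0 !Sform_E0l !Sform_E0r.
have cj : conjc (Complex t 0) = Complex t 0 by rewrite /= oppr0.
rewrite cj conjc_inv.
have nzc : conjc (x NN 0) != 0 by rewrite conjc_eq0.
split; field; by rewrite ?nz ?nzc.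
Qed.

Lemma height_vpt (x : cv) (t : R) : x NN 0 != 0 -> Sform x x = 0 ->
  height (vpt x t) = 2 * t.
Proof.
move=> nz hxx; apply: oppr_inj; rewrite -ReSlift (S_vpt t nz hxx).1 ReN ReD /=; ring.
Qed.

Definition hpt (t : R) : pt R n := fun i => if is_w0 i then Complex t 0 else 0.

Lemma height_hpt (t : R) : height (hpt t) = 2 * t.
Proof.
rewrite heightE big_ord_recl big1 ?addr0 // => i _.
by rewrite /hterm /hpt w0_lift /nsq /= expr0n /= addr0 oppr0.
Qed.

Lemma S_hpt (t : R) (x : cv) : x NN 0 = 0 -> Sform (lift_pt (hpt t)) x = - x (wid ord0) 0.
Proof.
move=> h; rewrite SformE big_ord_recl big1 ?addr0.
  by rewrite /Sterm !lift_wid lift_NN /hpt w0_ord0 h conjc1; ring.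
by move=> i _; rewrite /Sterm lift_wid /hpt w0_lift conjc0 mul0r.
Qed.

Lemma good_point (x : cv) (s : R) : 0 < s -> Sform x x = 0 ->
  nsq (x NN 0) * s ^+ 2 < 4 ->
  exists q : pt R n, s < height q /\ s * nsq (Sform (lift_pt q) x) < height q.
Proof.
move=> s0 hxx hlt.
have [c0|nz] := eqVneq (x NN 0) 0.
  set t := s + s * nsq (x (wid ord0) 0) + 1.
  have A0 := nsq_ge0 (x (wid ord0) 0).
  exists (hpt t); rewrite height_hpt S_hpt // nsqN /t; split; nra.
have N0 := nsq_gt0 nz.
set N := nsq (x NN 0) in hlt N0 *.
set t := (s / 2 + 2 / (s * N)) / 2.
have sN : 0 < s * N by apply: mulr_gt0.
have hb : s / 2 < 2 / (s * N).
  rewrite ltr_pdivlMr // mulrAC ltr_pdivrMr //; lra.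
exists (vpt x t); rewrite height_vpt // (S_vpt t nz hxx).2 nsqN nsqM -/N.
have -> : nsq (Complex t 0) = t ^+ 2 by rewrite /nsq /= expr0n /= addr0.
have tb : t < 2 / (s * N) by rewrite /t; lra.
have ta : s / 2 < t by rewrite /t; lra.
split; first lra.
have : t * (s * N) < 2 by rewrite -ltr_pdivlMr.
have t0 : 0 < t by lra.
nra.
Qed.

Lemma disj_bound (X : 'M[C]_(n.+1)) (s : R) : in_UQ X -> 0 < s ->
  cinterior (@horoball R n s) `&` cinterior (act_set X (@horoball R n s)) = set0 ->
  4 <= nsq (bottom_left X) * s ^+ 2.
Proof.
move=> hX s0 hdis; rewrite leNgt; apply/negP => hlt.
set x := X *m E0.
have hxx : Sform x x = 0 by rewrite Sinv // SE0E0.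
rewrite bl_E0 -/x in hlt.
have [q [h1 h2]] := good_point s0 hxx hlt.
set F := nsq (Sform (lift_pt q) x) in h2.
have F0 : 0 <= F by apply: nsq_ge0.
set g := Num.min (height q - s) (height q - s * F).
have g0 : 0 < g by rewrite lt_min; apply/andP; split; lra.
have g1 : g <= height q - s by rewrite ge_min lexx.
have g2 : g <= height q - s * F by rewrite ge_min lexx orbT.
set eta := g / (2 * (1 + s)).
have et0 : 0 < eta by apply: divr_gt0 => //; lra.
have et1 : (1 + s) * eta < g.
  have -> : (1 + s) * eta = g / 2.
    by rewrite /eta; field; apply: lt0r_neq0; lra.
  lra.
have [e1 e10 He1] := h_near q et0.
have [e2 e20 He2] := f_near q x et0.
suff : (cinterior (@horoball R n s) `&` cinterior (act_set X (@horoball R n s))) q.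
  by rewrite hdis.
split.
  exists e1 => // q' hq'; rewrite /horoball /=.
  have := He1 q' hq'; nra.
exists (Num.min e1 e2); first by rewrite lt_min e10 e20.
move=> q'; rewrite lt_min => /andP[hq1 hq2].
have k1 := He1 q' hq1; have k2 := He2 q' hq2.
rewrite -/F in k2.
apply: in_image => //.
  nra.
nra.
Qed.

Lemma mulcJ (c : C) : c * conjc c = real_complex R (nsq c).
Proof. by case: c => a b; rewrite /nsq /=; congr Complex; ring. Qed.

Lemma mxDE (A B : cv) k : (A + B) k 0 = A k 0 + B k 0.
Proof. by rewrite mxE. Qed.
Lemma mxZE (a : C) (A : cv) k : (a *: A) k 0 = a * A k 0.
Proof. by rewrite mxE. Qed.

Lemma upper_pts (X : 'M[C]_(n.+1)) (s : R) : in_UQ X -> 0 < s ->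
  (X *m E0) NN 0 != 0 ->
  exists p' : pt R n, @horoball R n s p' /\
    act X p' = vpt (X *m E0) (2 / (s * nsq ((X *m E0) NN 0))).
Proof.
move=> hX s0 nz.
have hU : X \in unitmx by case: hX.
set x := X *m E0 in nz *; set c := x NN 0 in nz *.
set v := invmx X *m E0.
have Xv : X *m v = E0 by rewrite /v mulmxA mulmxV // mul1mx.
have hvv : Sform v v = 0 by rewrite -(Sinv _ _ hX) Xv SE0E0.
have hvE : Sform v E0 = Sform E0 x by rewrite -(Sinv _ _ hX) Xv.
rewrite Sform_E0r Sform_E0l -/c in hvE.
have vN : v NN 0 = conjc c by rewrite -[v NN 0]conjcK; congr conjc; apply: oppr_inj.
have nzv : v NN 0 != 0 by rewrite vN conjc_eq0.
exists (vpt v (s / 2)); split.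
  by rewrite /horoball /= height_vpt //; lra.
rewrite actE lift_vpt // mulmxDr -!scalemxAr Xv -/x.
apply/funext => i; rewrite /pz /vpt !mxDE !mxZE -/c E0_wid E0_NN vN.
have e1 : Complex (s / 2) 0 = real_complex R s / 2.
  by rewrite -(rmorph_nat (real_complex R) 2) -fmorph_div.
have e2 : Complex (2 / (s * nsq c)) 0 = 2 / (real_complex R s * (c * conjc c)).
  by rewrite mulcJ -rmorphM -(rmorph_nat (real_complex R) 2) -fmorph_div.
have ns : real_complex R s != 0 by rewrite fmorph_eq0 gt_eqF.
have nzc : conjc c != 0 by rewrite conjc_eq0.
rewrite e1 e2; case: ifP => _; field; rewrite ?nz ?nzc ?ns //.
Qed.
End Alg.

Section Ana.
Variable R : realType.
Local Notation mu := (@lebesgue_measure R).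

Lemma ftc01 (F f : R -> R) :
  (forall t : R, 0 <= t <= 1 -> is_derive t 1 F (f t) /\ {for t, continuous f}) ->
  Rintegral mu `[0, 1] f = F 1 - F 0.
Proof.
move=> H.
have cF : forall t : R, 0 <= t <= 1 -> {for t, continuous F}.
  move=> t ht; have [dF _] := H t ht; apply/differentiable_continuous/derivable1_diffP.
  by case: dF.
have := @continuous_FTC2 R f F 0 1 ltr01.
rewrite /Rintegral => ->.
- by [].
- apply: continuous_in_subspaceT => t; rewrite inE /= in_itv /= => /H [].
  by [].
- split.
  + move=> t; rewrite in_itv /= => /andP[t0 t1].
    by have [[]] := H t (ltac:(by rewrite (ltW t0) (ltW t1))).
  + by apply: cvg_at_right_filter; apply: cF; rewrite lexx ler01.
  + by apply: cvg_at_left_filter; apply: cF; rewrite lexx ler01.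
- move=> t; rewrite in_itv /= => /andP[t0 t1].
  have [dF _] := H t (ltac:(by rewrite (ltW t0) (ltW t1))).
  by rewrite derive1E derive_val.
Qed.

Lemma cont_sum (I : Type) (r : seq I) (F : I -> R -> R) (t : R) :
  (forall i, {for t, continuous (F i)}) -> {for t, continuous (fun u => \sum_(i <- r) F i u)}.
Proof.
move=> H; rewrite -fct_sumE.
elim/big_ind: _ => //.
- exact: cst_continuous.
- by move=> f g cf cg; apply: continuousD.
Qed.

Variable n : nat.
Definition reF (g : R -> pt R n) (i : 'I_n) (u : R) := complex.Re (g u i).
Definition imF (g : R -> pt R n) (i : 'I_n) (u : R) := complex.Im (g u i).
Definition hT (g : R -> pt R n) (i : 'I_n) (u : R) :=
  if is_w0 i then 2 * reF g i u else - (reF g i u * reF g i u + imF g i u * imF g i u).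
Definition dhT (g : R -> pt R n) (i : 'I_n) (u : R) :=
  if is_w0 i then 2 * derive1 (reF g i) u
  else - (2 * reF g i u * derive1 (reF g i) u + 2 * imF g i u * derive1 (imF g i) u).
Definition dh (g : R -> pt R n) (u : R) := \sum_(i < n) dhT g i u.

Lemma hcurveE (g : R -> pt R n) : (fun u => height (g u)) = \sum_(i < n) hT g i.
Proof.
rewrite fct_sumE; apply/funext => u; rewrite /height; apply: eq_bigr => i _.
by rewrite /hT /nsq !expr2.
Qed.

Lemma reF_derive (g : R -> pt R n) (i : 'I_n) (t : R) : C1curve g ->
  is_derive t 1 (reF g i) (derive1 (reF g i) t).
Proof. by move=> hg; have [h _] := hg i; rewrite derive1E; apply: derivableP; apply: h. Qed.
Lemma imF_derive (g : R -> pt R n) (i : 'I_n) (t : R) : C1curve g ->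
  is_derive t 1 (imF g i) (derive1 (imF g i) t).
Proof. by move=> hg; have [_ [_ [h _]]] := hg i; rewrite derive1E; apply: derivableP; apply: h. Qed.

Lemma reF_cont (g : R -> pt R n) (i : 'I_n) (t : R) : C1curve g -> {for t, continuous (reF g i)}.
Proof.
move=> hg; have [h _] := hg i.
by apply/differentiable_continuous/derivable1_diffP; apply: h.
Qed.
Lemma imF_cont (g : R -> pt R n) (i : 'I_n) (t : R) : C1curve g -> {for t, continuous (imF g i)}.
Proof.
move=> hg; have [_ [_ [h _]]] := hg i.
by apply/differentiable_continuous/derivable1_diffP; apply: h.
Qed.
Lemma dreF_cont (g : R -> pt R n) (i : 'I_n) (t : R) : C1curve g -> {for t, continuous (derive1 (reF g i))}.
Proof. by move=> hg; have [_ [h _]] := hg i; apply: h. Qed.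
Lemma dimF_cont (g : R -> pt R n) (i : 'I_n) (t : R) : C1curve g -> {for t, continuous (derive1 (imF g i))}.
Proof. by move=> hg; have [_ [_ [_ h]]] := hg i; apply: h. Qed.

Lemma h_derive (g : R -> pt R n) (t : R) : C1curve g ->
  is_derive t 1 (fun u => height (g u)) (dh g t).
Proof.
move=> hg; rewrite hcurveE /dh; apply: is_derive_sum => i.
have hr := reF_derive i t hg; have hi := imF_derive i t hg.
rewrite /hT /dhT; case: (is_w0 i).
  exact: (is_derive_eq (is_deriveZ 2 hr)).
have h := is_deriveN (is_deriveD (is_deriveM hr hr) (is_deriveM hi hi)).
apply: (is_derive_eq h).
rewrite /GRing.scale /=; ring.
Qed.

Lemma h_cont (g : R -> pt R n) (t : R) : C1curve g -> {for t, continuous (fun u => height (g u))}.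
Proof.
move=> hg; rewrite hcurveE fct_sumE; apply: cont_sum => i.
rewrite /hT; case: (is_w0 i).
  by apply: continuousM; [apply: cst_continuous | apply: reF_cont].
apply: continuousN; apply: continuousD; apply: continuousM;
  by [apply: reF_cont | apply: imF_cont].
Qed.

Lemma dh_cont (g : R -> pt R n) (t : R) : C1curve g -> {for t, continuous (dh g)}.
Proof.
move=> hg; apply: cont_sum => i.
rewrite /dhT; case: (is_w0 i).
  by apply: continuousM; [apply: cst_continuous | apply: dreF_cont].
apply: continuousN; apply: continuousD.
  apply: continuousM; last by apply: dreF_cont.
  by apply: continuousM; [apply: cst_continuous | apply: reF_cont].
apply: continuousM; last by apply: dimF_cont.
by apply: continuousM; [apply: cst_continuous | apply: imF_cont].
Qed.

Definition RA (g : R -> pt R n) (u : R) := \sum_(i < n)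
  (if is_w0 i then derive1 (reF g i) u
   else - (derive1 (reF g i) u * reF g i u + derive1 (imF g i) u * imF g i u)).
Definition IA (g : R -> pt R n) (u : R) := \sum_(i < n)
  (if is_w0 i then derive1 (imF g i) u
   else - (derive1 (reF g i) u * imF g i u - derive1 (imF g i) u * reF g i u)).
Definition BB (g : R -> pt R n) (u : R) := \sum_(i < n)
  (if is_w0 i then 0
   else derive1 (reF g i) u * derive1 (reF g i) u + derive1 (imF g i) u * derive1 (imF g i) u).

Lemma metricE (g : R -> pt R n) (t : R) :
  metric (g t) (velocity g t) =
  4 / (height (g t) * height (g t)) *
    (RA g t * RA g t + IA g t * IA g t + height (g t) * BB g t).
Proof.
rewrite /metric /nsq Re_sum Im_sum !expr2.
have -> : \sum_(i < n) complex.Re (if is_w0 i then velocity g t i else - ((velocity g t i)^*%C * g t i)) = RA g t.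
  apply: eq_bigr => i _; rewrite /velocity; case: ifP => _ //.
  by rewrite ReN ReM ReJ ImJ /reF /imF /=; congr (- _); ring.
have -> : \sum_(i < n) complex.Im (if is_w0 i then velocity g t i else - ((velocity g t i)^*%C * g t i)) = IA g t.
  apply: eq_bigr => i _; rewrite /velocity; case: ifP => _ //.
  by rewrite ImN ImM ReJ ImJ /reF /imF /=; congr (- _); ring.
congr (_ / _ * (_ + _ * _)).
Qed.

Lemma RA_dh (g : R -> pt R n) (t : R) : 2 * RA g t = dh g t.
Proof.
rewrite /RA /dh mulr_sumr; apply: eq_bigr => i _; rewrite /dhT; case: ifP => _ //; ring.
Qed.

Lemma BB_ge0 (g : R -> pt R n) (t : R) : 0 <= BB g t.
Proof.
apply: sumr_ge0 => i _; case: ifP => _ //.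
by apply: addr_ge0; rewrite -expr2 sqr_ge0.
Qed.

Lemma sqrt_metric_ge (g : R -> pt R n) (t : R) : 0 < height (g t) ->
  - (dh g t / height (g t)) <= Num.sqrt (metric (g t) (velocity g t)).
Proof.
move=> h0; rewrite metricE -RA_dh.
set h := height (g t) in h0 *.
have B0 := BB_ge0 g t.
set a := RA g t; set b := IA g t; set B := BB g t.
apply: (le_trans (ler_norm _)); rewrite normrN -sqrtr_sqr.
apply: ler_wsqrtr.
have -> : (2 * a / h) ^+ 2 = 4 / (h * h) * (a * a) by field; rewrite gt_eqF.
rewrite ler_wpM2l //; first by apply: divr_ge0 => //; apply: mulr_ge0; apply: ltW.
have : 0 <= b * b by rewrite -expr2 sqr_ge0.
have : 0 <= h * B by apply: mulr_ge0 => //; apply: ltW.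
lra.
Qed.

Lemma RA_cont (g : R -> pt R n) (t : R) : C1curve g -> {for t, continuous (RA g)}.
Proof.
move=> hg; apply: cont_sum => i; case: (is_w0 i); first exact: dreF_cont.
apply: continuousN; apply: continuousD; apply: continuousM.
- exact: dreF_cont.
- exact: reF_cont.
- exact: dimF_cont.
- exact: imF_cont.
Qed.

Lemma IA_cont (g : R -> pt R n) (t : R) : C1curve g -> {for t, continuous (IA g)}.
Proof.
move=> hg; apply: cont_sum => i; case: (is_w0 i); first exact: dimF_cont.
apply: continuousN; apply: continuousB; apply: continuousM.
- exact: dreF_cont.
- exact: imF_cont.
- exact: dimF_cont.
- exact: reF_cont.
Qed.

Lemma BB_cont (g : R -> pt R n) (t : R) : C1curve g -> {for t, continuous (BB g)}.
Proof.
move=> hg; apply: cont_sum => i; case: (is_w0 i); first exact: cst_continuous.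
apply: continuousD; apply: continuousM.
- exact: dreF_cont.
- exact: dreF_cont.
- exact: dimF_cont.
- exact: dimF_cont.
Qed.

Lemma sqrt_metric_cont (g : R -> pt R n) (t : R) : C1curve g -> height (g t) != 0 ->
  {for t, continuous (fun u => Num.sqrt (metric (g u) (velocity g u)))}.
Proof.
move=> hg h0.
have -> : (fun u => Num.sqrt (metric (g u) (velocity g u))) =
  Num.sqrt \o (fun u => 4 / (height (g u) * height (g u)) *
    (RA g u * RA g u + IA g u * IA g u + height (g u) * BB g u)).
  by apply/funext => u; rewrite /= metricE.
apply: continuous_comp; last by apply: sqrt_continuous.
have hc := h_cont (t:=t) hg.
have ra := RA_cont (t:=t) hg; have ia := IA_cont (t:=t) hg; have bb := BB_cont (t:=t) hg.
apply: continuousM.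
  apply: continuousM; first by apply: cst_continuous.
  apply: continuousV; first by rewrite mulf_neq0.
  exact: (continuousM hc hc).
apply: continuousD; last exact: (continuousM hc bb).
apply: continuousD; first exact: (continuousM ra ra).
exact: (continuousM ia ia).
Qed.

Lemma itv01P (x : R) : x \in `[0, 1]%classic -> 0 <= x <= 1.
Proof. by rewrite inE /= in_itv. Qed.

Lemma itv01P' (x : R) : `[0, 1]%classic x -> 0 <= x <= 1.
Proof. by rewrite /= in_itv. Qed.

Lemma cont_int01 (f : R -> R) : (forall t : R, 0 <= t <= 1 -> {for t, continuous f}) ->
  mu.-integrable `[0, 1] (EFin \o f).
Proof.
move=> H; apply: continuous_compact_integrable; first exact: segment_compact.
by apply: continuous_in_subspaceT => x /itv01P /H.
Qed.

Lemma length_lb (p q : pt R n) (g : R -> pt R n) : admissible p q g ->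
  ln (height p) - ln (height q) <= curve_length g.
Proof.
move=> [hg [g0 [g1 hS]]].
have hpos : forall t : R, 0 <= t <= 1 -> 0 < height (g t) by move=> t /hS.
set f := fun u => - (dh g u / height (g u)).
have fc : forall t : R, 0 <= t <= 1 -> {for t, continuous f}.
  move=> t ht; apply: continuousN; apply: continuousM; first exact: (dh_cont (t:=t) hg).
  apply: continuousV; first by rewrite gt_eqF // hpos.
  exact: (h_cont (t:=t) hg).
have hI : Rintegral mu `[0, 1] f =
    (fun u => - ln (height (g u))) 1 - (fun u => - ln (height (g u))) 0.
  apply: (ftc01 (F := fun u => - ln (height (g u)))) => t ht; split; last exact: fc.
  have h1 := is_derive1_comp (is_derive1_ln (hpos t ht)) (@h_derive g t hg).
  have h2 := is_deriveN h1.
  have E : - ((height (g t))^-1 * dh g t) = f t by rewrite /f mulrC.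
  exact: (is_derive_eq h2 E).
rewrite /= g0 g1 in hI.
rewrite /curve_length.
apply: (@le_trans _ _ (Rintegral mu `[0, 1] f)); first by rewrite hI; lra.
apply: le_Rintegral.
- exact: measurable_itv.
- exact: cont_int01.
- apply: cont_int01 => t ht; apply: sqrt_metric_cont => //.
  by rewrite gt_eqF // hpos.
- by move=> x /itv01P' hx; apply: sqrt_metric_ge; apply: hpos.
Qed.

Lemma aff_derive (a b t : R) : is_derive t 1 (fun u : R => a + u * b) b.
Proof.
have h := is_deriveD (is_derive_cst a t 1) (is_deriveM (is_derive_id t 1) (is_derive_cst b t 1)).
apply: (is_derive_eq h); rewrite /GRing.scale /=; ring.
Qed.

Lemma aff_derive1 (a b : R) : derive1 (fun u : R => a + u * b) = cst b.
Proof. by apply/funext => t; rewrite derive1E; case: (aff_derive a b t) => _ ->. Qed.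

Lemma aff_C1 (g : R -> pt R n) (a b c d : 'I_n -> R) :
  (forall i u, complex.Re (g u i) = a i + u * b i) ->
  (forall i u, complex.Im (g u i) = c i + u * d i) ->
  C1curve g /\ forall u, velocity g u = fun i => Complex (b i) (d i).
Proof.
move=> hr hi.
have er : forall i, (fun u => complex.Re (g u i)) = fun u => a i + u * b i.
  by move=> i; apply/funext => u; rewrite hr.
have ei : forall i, (fun u => complex.Im (g u i)) = fun u => c i + u * d i.
  by move=> i; apply/funext => u; rewrite hi.
split.
  move=> i; rewrite er ei !aff_derive1; split; last split; last split.
  - by move=> t; apply: ex_derive; apply: aff_derive.
  - by move=> t; apply: cst_continuous.
  - by move=> t; apply: ex_derive; apply: aff_derive.
  - by move=> t; apply: cst_continuous.
move=> u; apply/funext => i; rewrite /velocity er ei !aff_derive1.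
by [].
Qed.

Definition sline (p q : pt R n) (u : R) : pt R n :=
  fun i => p i + Complex u 0 * (q i - p i).

Lemma sline_height (p q : pt R n) (u : R) : 0 <= u <= 1 ->
  (1 - u) * height p + u * height q <= height (sline p q u).
Proof.
move=> /andP[u0 u1]; rewrite /height !mulr_sumr -big_split /=; apply: ler_sum => i _.
rewrite /sline; case: ifP => _; rewrite /nsq ?ReD ?ImD ?ReM ?ImM ?ReN ?ImN ?ReD ?ImD /=.
  by rewrite ?ReD ?ReN; lra.
rewrite ?ImD ?ImN ?ReD ?ReN.
set a := complex.Re (p i); set b := complex.Im (p i).
set c := complex.Re (q i); set d := complex.Im (q i).
have : 0 <= u * (1 - u) * ((a - c) ^+ 2 + (b - d) ^+ 2).
  apply: mulr_ge0; first by apply: mulr_ge0; lra.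
  by apply: addr_ge0; apply: sqr_ge0.
nra.
Qed.

Lemma sline_adm (p q : pt R n) : 0 < height p -> 0 < height q ->
  admissible p q (sline p q).
Proof.
move=> hp hq.
have hr : forall i u, complex.Re (sline p q u i) = complex.Re (p i) + u * complex.Re (q i - p i).
  by move=> i u; rewrite /sline !ReD !ReM !ImD !ReD !ReN !ImN /=; ring.
have hi : forall i u, complex.Im (sline p q u i) = complex.Im (p i) + u * complex.Im (q i - p i).
  by move=> i u; rewrite /sline !ImD !ImM !ReD !ImD !ReN !ImN /=; ring.
have [hC _] := aff_C1 hr hi.
split => //; split.
  by apply/funext => i; rewrite /sline mul0r addr0.
split.
  by apply/funext => i; rewrite /sline mul1r addrC subrK.
move=> t ht; rewrite /Siegel /=.
apply: (lt_le_trans _ (sline_height p q ht)).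
case/andP: ht => t0 t1.
have [->|tpos] := eqVneq t 0; first by rewrite subr0 mul1r mul0r addr0.
have : 0 < t * height q by apply: mulr_gt0 => //; rewrite lt_neqAle eq_sym tpos.
have : 0 <= (1 - t) * height p by apply: mulr_ge0; lra.
lra.
Qed.
End Ana.

Section Main.
Variable R : realType.
Local Notation C := (complex R).
Local Notation mu := (@lebesgue_measure R).
Variable m : nat.
Local Notation n := m.+2.
Local Notation cv := 'cV[C]_(n.+1).
Local Notation NN := (@NN m).
Local Notation E0 := (@E0 R m).

Lemma vcurve_len (x : cv) (t0 t1 : R) : x NN 0 != 0 -> Sform x x = 0 ->
  0 < t1 -> 0 < t0 -> t1 <= t0 ->
  exists g, admissible (vpt x t0) (vpt x t1) g /\ curve_length g = ln t0 - ln t1.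
Proof.
move=> nz hxx t10 t00 t10le.
set d := t1 - t0.
set tau := fun u : R => t0 + u * d.
set g := fun u => vpt x (tau u).
have tpos : forall u : R, 0 <= u <= 1 -> 0 < tau u.
  move=> u /andP[u0 u1]; rewrite /tau /d.
  have : 0 <= u * (t0 - t1) by apply: mulr_ge0 => //; lra.
  have : u * (t0 - t1) <= t0 - t1 by rewrite ler_piMl //; lra.
  lra.
have hr : forall i u, complex.Re (g u i) =
    (complex.Re (x (wid i) 0 / x NN 0) + (if is_w0 i then t0 else 0)) + u * (if is_w0 i then d else 0).
  move=> i u; rewrite /g /vpt ReD; case: ifP => _ /=; rewrite /tau; ring.
have hi : forall i u, complex.Im (g u i) = complex.Im (x (wid i) 0 / x NN 0) + u * 0.
  move=> i u; rewrite /g /vpt ImD; case: ifP => _ /=; ring.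
have [hC hv] := aff_C1 hr hi.
exists g; split.
  split => //; split.
    by rewrite /g /tau mul0r addr0.
  split.
    by rewrite /g /tau mul1r /d addrC subrK.
  by move=> t ht; rewrite /Siegel /= /g height_vpt // mulr_gt0 // tpos.
set f := fun u => - d / tau u.
have hm : forall u : R, 0 <= u <= 1 -> Num.sqrt (metric (g u) (velocity g u)) = f u.
  move=> u hu; rewrite hv /metric.
  have -> : \sum_(i < n) (if is_w0 i then 0 else nsq (Complex (if is_w0 i then d else 0) 0)) = 0.
    rewrite big_ord_recl big1 ?addr0 // => i _; rewrite w0_lift /nsq /=; rewrite expr0n /= addr0.
    by [].
  rewrite big_ord_recl big1 ?addr0; last first.
    move=> i _; rewrite w0_lift /=; have -> : Complex 0 (- 0) = 0 :> C by rewrite oppr0.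
    by rewrite mul0r oppr0.
  rewrite w0_ord0 /g height_vpt // mulr0 addr0 /nsq /= expr0n /= addr0.
  have tp := tpos u hu.
  have -> : 4 / (2 * tau u) ^+ 2 * d ^+ 2 = (d / tau u) ^+ 2 by field; rewrite gt_eqF.
  rewrite sqrtr_sqr ler0_norm; first by rewrite /f mulNr.
  by apply: mulr_le0_ge0; [rewrite /d; lra | rewrite invr_ge0; apply: ltW].
rewrite /curve_length.
have -> : Rintegral mu `[0, 1] (fun t => Num.sqrt (metric (g t) (velocity g t))) = Rintegral mu `[0, 1] f.
  by apply: eq_Rintegral => u /itv01P hu; apply: hm.
have tc : forall u : R, {for u, continuous tau}.
  move=> u; apply/differentiable_continuous/derivable1_diffP.
  by apply: ex_derive; apply: aff_derive.
rewrite (@ftc01 _ (fun u => - ln (tau u))).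
  rewrite /tau /=. have -> : t0 + 1 * d = t1 by rewrite /d; ring.
  by rewrite /tau mul0r addr0; ring.
move=> u hu; split.
  have h1 := is_derive1_comp (is_derive1_ln (tpos u hu)) (aff_derive t0 d u).
  have h2 := is_deriveN h1.
  have E : - ((tau u)^-1 * d) = f u by rewrite /f mulrC mulNr.
  exact: (is_derive_eq h2 E).
apply: continuousM; first by apply: cst_continuous.
apply: continuousV; last exact: tc.
by rewrite gt_eqF // tpos.
Qed.

Lemma dist_lb (p q : pt R n) (L : R) : (exists g, admissible p q g) ->
  (forall g, admissible p q g -> L <= curve_length g) -> L <= dist_CH p q.
Proof.
move=> [g0 hg0] H; rewrite /dist_CH; apply: lb_le_inf.
  by exists (curve_length g0); exists g0.
by move=> z [g hg <-]; apply: H.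
Qed.

Lemma length_ge0 (g : R -> pt R n) : 0 <= curve_length g.
Proof. by apply: Rintegral_ge0 => x _; apply: sqrtr_ge0. Qed.

Lemma dist_ub (p q : pt R n) (g : R -> pt R n) : admissible p q g ->
  dist_CH p q <= curve_length g.
Proof.
move=> hg; rewrite /dist_CH; apply: ge_inf; last by exists g.
by exists 0 => z [g' _ <-]; apply: length_ge0.
Qed.

Lemma main_thm (X : 'M[C]_(n.+1)) (s : R) :
  in_UQ X -> 0 < s ->
  cinterior (@horoball R n s) `&` cinterior (act_set X (@horoball R n s)) = set0 ->
  set_dist' (@horoball R n s) (act_set X (@horoball R n s)) =
    ln (cabs (bottom_left X)) + ln (s / 2).
Proof.
move=> hX s0 hdis.
have hb := disj_bound hX s0 hdis.
rewrite bl_E0 in hb *.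
set x := X *m E0 in hb *.
set N := nsq (x NN 0) in hb.
have N0 : 0 <= N by apply: nsq_ge0.
have Np : 0 < N.
  rewrite lt_neqAle eq_sym N0 andbT; apply/eqP => N00; move: hb; rewrite N00 mul0r; lra.
have nz : x NN 0 != 0 by apply/eqP => h; move: Np; rewrite /N h /nsq /= expr0n /= addr0 ltxx.
have hxx : Sform x x = 0 by rewrite Sinv // SE0E0.
set T := ln (cabs (x NN 0)) + ln (s / 2).
set K := N * (s / 2) * (s / 2).
have s2 : 0 < s / 2 by lra.
have K0 : 0 < K by rewrite /K !mulr_gt0.
have hT : ln K = 2 * T.
  rewrite /K /T /cabs -/N !lnM ?posrE //; last by rewrite mulr_gt0.
  have : ln N = ln (Num.sqrt N) + ln (Num.sqrt N).
    by rewrite -lnM ?posrE ?sqrtr_gt0 // -expr2 sqr_sqrtr.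
  lra.
have lower : forall p q, @horoball R n s p -> act_set X (@horoball R n s) q -> T <= dist'_CH p q.
  move=> p q hp [p' hp' <-].
  have hpp : 0 < height p by rewrite /horoball /= in hp; lra.
  have hpp' : 0 < height p' by rewrite /horoball /= in hp'; lra.
  have [nzz [hq hb4]] := act_bound hX hpp'.
  rewrite bl_E0 -/x -/N in hb4.
  have hqp : 0 < height (act X p').
    by rewrite hq divr_gt0 // nsq_gt0.
  rewrite /dist'_CH ler_pdivlMr; last lra.
  rewrite mulrC -hT.
  apply: dist_lb; first by exists (sline p (act X p')); apply: sline_adm.
  move=> g hg; apply: le_trans (length_lb hg).
  rewrite -ln_div ?posrE //.
  rewrite ler_ln ?posrE ?divr_gt0 //.
  rewrite ler_pdivlMr //.
  rewrite /horoball /= in hp hp'.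
  rewrite /K.
  set hq' := height (act X p') in hqp hb4 *.
  have : s * s <= height p * height p' by apply: ler_pM; lra.
  nra.
set t1 := 2 / (s * N).
have t10 : 0 < t1 by rewrite /t1 divr_gt0 // mulr_gt0.
have t1le : t1 <= s / 2.
  rewrite /t1 ler_pdivrMr ?mulr_gt0 //; nra.
have [g [hg hlen]] := vcurve_len nz hxx t10 s2 t1le.
have [p' [hp' hp'q]] := upper_pts hX s0 nz.
rewrite -/x -/N -/t1 in hp'q.
have p0H : @horoball R n s (vpt x (s / 2)).
  by rewrite /horoball /= height_vpt //; lra.
have q0B : act_set X (@horoball R n s) (vpt x t1) by exists p'.
have up : dist'_CH (vpt x (s / 2)) (vpt x t1) <= T.
  rewrite /dist'_CH ler_pdivrMr; last lra.
  apply: (le_trans (dist_ub hg)); rewrite hlen [T * 2]mulrC -hT.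
  rewrite -ln_div ?posrE //.
  have -> : s / 2 / t1 = K by rewrite /t1 /K; field; rewrite ?gt_eqF.
  by [].
rewrite /set_dist'; apply/eqP; rewrite eq_le; apply/andP; split.
  apply: le_trans up; apply: ge_inf.
    by exists T => z [p hp [q hq <-]]; apply: lower.
  by exists (vpt x (s / 2)) => //; exists (vpt x t1).
apply: lb_le_inf.
  by exists (dist'_CH (vpt x (s / 2)) (vpt x t1)); exists (vpt x (s / 2)) => //; exists (vpt x t1).
by move=> z [p hp [q hq <-]]; apply: lower.
Qed.
End Main.

Unset Implicit Arguments.

Theorem lemma6p3 (R : realType) (n : nat) (hn : (2 <= n)%N)
  (X : 'M[complex R]_(n.+1)) (s : R) :
  in_UQ X -> 0 < s ->
  cinterior (@horoball R n s) `&` cinterior (act_set X (@horoball R n s)) = set0 ->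
  set_dist' (@horoball R n s) (act_set X (@horoball R n s)) =
    ln (cabs (bottom_left X)) + ln (s / 2).
Proof.
case: n hn X => [|[|m]] // _ X.
exact: (@main_thm R m X s).
Qed.
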